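(* Let $C$ be any quantum gate circuit on $n$ qubits with operator matrix $A\in\mathbb{C}^{2^n\times 2^n}$ (rows and columns indexed by bit strings in $\{0,1\}^n$). Then there exists a Quantum Petri net $Q$ whose reachability set is in bijection with $\{0,1\}^n$ and whose rate matrix, under this identification, satisfies $R_Q=A$.
   Context: Multisets: a multiset over $A$ is a map $s:A\to\mathbb{N}$; $s\le s'$ is componentwise; $1$ is the empty multiset; maps into multisets are lifted additively to multisets. Net structure: $N=(P,T,F)$ with disjoint places $P$ and transitions $T$, a generator $G$ and well-formedness predicate WF selecting generated places $P_G$ and transitions $T_G$ (for place-transition nets $P_G=P$, $T_G=T$, WF always true); flow $F^-,F^+:T_G\to\mathcal{M}(P_G)$ (input/output). A marking is $m\in\mathcal{M}(P_G)$, a concurrence $t\in\mathcal{M}(T_G)$; $t$ is enabled at $m$ if $F^-(t)\le m$ and WF$(m,t)$, and firing gives $m'=m-F^-(t)+F^+(t)$, written $m\xrightarrow{t}_c m'$. A system net $S=(N,M_0)$ has reachability set $\mathcal{R}_0$ = markings reachable from $M_0$ by single-transition firings. A Quantum Petri net is $Q=(S,r)$ with $r:\mathcal{R}_0\times\mathcal{M}(T_G)\to\mathbb{C}$, written $r_m(t)$. Its rate matrix is the $\mathcal{R}_0\times\mathcal{R}_0$ matrix $R_Q[m',m]=\sum_{t:\,m\xrightarrow{t}_c m'} r_m(t)$, the sum over all concurrences $t$ (including the empty concurrence $1$) with $m\xrightarrow{t}_c m'$. *)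

(* Defs.v *)
From HB Require Import structures.
From mathcomp Require Import all_boot all_order all_algebra.
Set Implicit Arguments. Unset Strict Implicit. Unset Printing Implicit Defensive.
Import Order.TTheory GRing.Theory Num.Theory.
Local Open Scope ring_scope.

(* Operators on n qubits: 2^n x 2^n complex matrices; rows/columns indexed by
   'I_(2^n), identified with bit strings {0,1}^n. *)
Definition unitary (C : numClosedFieldType) (n : nat) (U : 'M[C]_(2 ^ n)) : bool :=
  U *m (map_mx Num.conj U)^T == 1%:M.

(* A circuit is a finite sequence of gates, each given by its (unitary)
   operator on the full n-qubit space, applied in order. *)
Record circuit (C : numClosedFieldType) (n : nat) := Circuit {
  gates : seq 'M[C]_(2 ^ n);
  gates_unitary : all (@unitary C n) gates }.

(* Operator matrix: the first gate is applied first (rightmost factor). *)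
Definition circuit_op (C : numClosedFieldType) (n : nat) (c : circuit C n)
  : 'M[C]_(2 ^ n) :=
  foldl (fun acc g => g *m acc) 1%:M (gates c).

(* A net given directly by its generated places P_G and transitions T_G,
   the flow functions F^-, F^+ and the well-formedness predicate WF. *)
Record net := Net {
  place : finType;
  trans : finType;
  Fin  : trans -> {ffun place -> nat};
  Fout : trans -> {ffun place -> nat};
  WF   : {ffun place -> nat} -> {ffun trans -> nat} -> bool }.

Definition marking (N : net) := {ffun place N -> nat}.
Definition conc (N : net) := {ffun trans N -> nat}.

Definition liftF (N : net) (F : trans N -> {ffun place N -> nat}) (t : conc N)
  : marking N := [ffun p => (\sum_(x : trans N) t x * F x p)%N].

Definition mle (N : net) (a b : marking N) : bool := [forall p, (a p <= b p)%N].

Definition enabled (N : net) (m : marking N) (t : conc N) : bool :=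
  mle (liftF (@Fin N) t) m && WF m t.

Definition fires (N : net) (m : marking N) (t : conc N) (m' : marking N) : bool :=
  enabled m t &&
  (m' == [ffun p => (m p - liftF (@Fin N) t p + liftF (@Fout N) t p)%N]).

Definition single (N : net) (x : trans N) : conc N := [ffun y => nat_of_bool (y == x)].

Inductive reachable (N : net) (M0 : marking N) : marking N -> Prop :=
| reach0 : reachable M0 M0
| reachS m x m' : reachable M0 m -> fires m (single x) m' -> reachable M0 m'.

(* Quantum Petri net Q = (S, r), S = (N, M0). r_m(t) is given for every
   marking m; only its values on the reachability set matter. *)
Record qpn (C : numClosedFieldType) := QPN {
  qnet : net;
  M0 : marking qnet;
  rate : marking qnet -> conc qnet -> C }.

Definition reach_set (C : numClosedFieldType) (Q : qpn C) (m : marking (qnet Q)) : Prop :=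
  reachable (@M0 C Q) m.

(* R_Q[m', m] = v : v is the sum of r_m(t) over all concurrences t with
   m --t-->_c m' (zero terms omitted; the set of nonzero terms is finite). *)
Definition rate_entry (C : numClosedFieldType) (Q : qpn C)
  (m' m : marking (qnet Q)) (v : C) : Prop :=
  exists s : seq (conc (qnet Q)),
    [/\ uniq s,
        (forall t, t \in s -> fires m t m'),
        (forall t, fires m t m' -> @rate C Q m t != 0 -> t \in s)
      & v = \sum_(t <- s) @rate C Q m t].

(* Main.v *)
Require Import Defs.
From HB Require Import structures.
From mathcomp Require Import all_boot all_order all_algebra.
Import GRing.Theory Num.Theory.
Local Open Scope ring_scope.

Section Cons.
Variable N : nat.
Definition PT := 'I_N.
Definition TT := ('I_N * 'I_N)%type.
Definition ind (i : 'I_N) : {ffun 'I_N -> nat} := [ffun p => nat_of_bool (p == i)].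
Definition myFin (x : TT) : {ffun 'I_N -> nat} := ind x.2.
Definition myFout (x : TT) : {ffun 'I_N -> nat} := ind x.1.
Definition myWF (m : {ffun 'I_N -> nat}) (t : {ffun TT -> nat}) : bool :=
  [exists x : TT, (t == [ffun y => nat_of_bool (y == x)]) && (m == ind x.2)].
Definition mynet : net := @Net (ordinal N) (prod (ordinal N) (ordinal N)) myFin myFout myWF.

Lemma ind_inj : injective ind.
Proof.
move=> i k e; have := congr1 (fun f : {ffun 'I_N -> nat} => f i) e; rewrite !ffunE eqxx.
by case: eqP.
Qed.

Lemma liftF_single (F : trans mynet -> {ffun place mynet -> nat}) x :
  liftF F (single x) = F x.
Proof.
apply/ffunP => p; rewrite ffunE (bigD1 x) //= big1 ?addn0.
  by rewrite ffunE eqxx mul1n.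
by move=> y /negbTE yx; rewrite ffunE yx mul0n.
Qed.

Lemma single_inj : injective (@single mynet).
Proof.
move=> x y e; have := congr1 (fun f : conc mynet => f x) e; rewrite !ffunE eqxx.
by case: eqP.
Qed.

Lemma fires_char (m m' : marking mynet) t :
  fires m t m' <-> exists x : TT, [/\ t = @single mynet x, m = ind x.2 & m' = ind x.1].
Proof.
split.
  case/andP => /andP [_ /existsP [x /andP [/eqP tx /eqP mx]]] /eqP ->.
  exists x; split => //.
  have -> : t = @single mynet x by [].
  apply/ffunP => p; rewrite ffunE !liftF_single mx /= /myFin /myFout subnn.
  by rewrite add0n.
case=> x [-> -> ->]; apply/andP; split.
  apply/andP; split.
    by apply/forallP => p; rewrite liftF_single.
  by apply/existsP; exists x; rewrite !eqxx.
apply/eqP/ffunP => p; rewrite ffunE !liftF_single /= /myFin /myFout.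
by rewrite ffunE subnn add0n ffunE.
Qed.
End Cons.

Theorem theorem1 (C : numClosedFieldType) (n : nat) (c : circuit C n) :
  exists Q : qpn C, exists phi : 'I_(2 ^ n) -> marking (qnet Q),
    [/\ injective phi,
        (forall m, @reach_set C Q m <-> exists i, m = phi i)
      & (forall i j, @rate_entry C Q (phi i) (phi j) (circuit_op c i j))].
Proof.
pose N := (2 ^ n)%N.
have N0 : (0 < N)%N by rewrite expn_gt0.
pose i0 : 'I_N := Ordinal N0.
pose A := circuit_op c.
pose r := fun (m : marking (mynet N)) (t : conc (mynet N)) =>
  \sum_(x : TT N) (if (t == @single (mynet N) x) && (m == ind N x.2) then A x.1 x.2 else 0).
exists (@QPN C (mynet N) (ind N i0) r), (@ind N); split.
- exact: ind_inj.
- move=> m; split.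
    rewrite /reach_set /=; elim => [|m1 x m' _ [i ->] /fires_char [y [_ _ ->]]].
      by exists i0.
    by exists y.1.
  case=> i ->; rewrite /reach_set /=.
  apply: (@reachS (mynet N) (ind N i0) (ind N i0) ((i, i0) : trans (mynet N)) (ind N i)); first exact: reach0.
  by apply/fires_char; exists (i, i0).
- move=> i j; exists [:: @single (mynet N) (i, j)]; split => //.
  + by move=> t; rewrite inE => /eqP ->; apply/fires_char; exists (i, j).
  + move=> t /fires_char [x [-> e1 e2]] _.
    by move/ind_inj: e1 => e1; move/ind_inj: e2 => e2;
       rewrite inE; case: x e1 e2 => a b /= <- <-.
  + rewrite big_cons big_nil addr0 /=.
    rewrite /r (bigD1 ((i, j) : TT N)) //= !eqxx /= big1 ?addr0 //.
    move=> y yn; case: eqP => //= /single_inj e.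
    by rewrite e eqxx in yn.
Qed.
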